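(* Let $\mathtt{L}$ be a line of $\mathcal{S}$ and $\theta$ a point of $\mathcal{S}$. If $\theta$ has distance $3$ from two points of $\mathtt{L}$, then $\theta$ has distance $2$ from the third point of $\mathtt{L}$.
   Context: Let $S=(P,L)$ and $S'=(P',L')$ be generalized quadrangles of order $(2,2)$ (every line has 3 points, every point lies on 3 lines, and for each point $x$ and line $l\not\ni x$ exactly one point of $l$ is collinear with $x$), with an isomorphism $x\mapsto x'$ from $S$ to $S'$. In a point-line geometry, $x^{\perp}$ is $x$ together with all points collinear with $x$, and $A^{\perp}=\bigcap_{a\in A}a^{\perp}$. A triad is a set of three pairwise non-collinear points, complete if $|T^{\perp}|=3$. The geometry $\mathcal{S}=(\mathcal{P},\mathcal{L})$ has point set $\mathcal{P}=\{(x,y')\in P\times P':y'\in x'^{\perp}\}$ and lines all $3$-subsets $\{(x,u'),(y,v'),(z,w')\}$ of $\mathcal{P}$ where $T=\{x,y,z\}$ (three distinct points) is a line or a complete triad of $S$ and $\{u',v',w'\}=T'^{\perp}$ in $S'$ with $u',v',w'$ distinct. Distance is measured in the collinearity graph of $\mathcal{S}$. *)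

(* Defs.v *)
From mathcomp Require Import all_boot.
Set Implicit Arguments. Unset Strict Implicit. Unset Printing Implicit Defensive.

Definition collinear (T : finType) (L : {set {set T}}) (x y : T) : bool :=
  (x != y) && [exists l in L, (x \in l) && (y \in l)].

Definition perp (T : finType) (L : {set {set T}}) (x : T) : {set T} :=
  [set y | (y == x) || collinear L x y].

Definition perpS (T : finType) (L : {set {set T}}) (A : {set T}) : {set T} :=
  \bigcap_(a in A) perp L a.

Definition is_GQ22 (T : finType) (L : {set {set T}}) : Prop :=
  [/\ forall l, l \in L -> #|l| = 3,
      forall x : T, #|[set l in L | x \in l]| = 3
    & forall (x : T) l, l \in L -> x \notin l ->
        #|[set y in l | collinear L x y]| = 1].

Definition triad (T : finType) (L : {set {set T}}) (A : {set T}) : bool :=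
  (#|A| == 3) && [forall x in A, forall y in A, (x != y) ==> ~~ collinear L x y].

Definition complete_triad (T : finType) (L : {set {set T}}) (A : {set T}) : bool :=
  triad L A && (#|perpS L A| == 3).

Definition geom_iso (P P' : finType) (L : {set {set P}}) (L' : {set {set P'}})
  (f : P -> P') : Prop :=
  bijective f /\ forall l : {set P}, (l \in L) = (f @: l \in L').

Definition calP (P P' : finType) (L' : {set {set P'}}) (f : P -> P') : {set P * P'} :=
  [set p | p.2 \in perp L' (f p.1)].

Definition calL (P P' : finType) (L : {set {set P}}) (L' : {set {set P'}})
  (f : P -> P') : {set {set P * P'}} :=
  [set X : {set P * P'} |
    let T := [set p.1 | p in X] in
    [&& X \subset calP L' f, #|X| == 3, #|T| == 3,
        (T \in L) || complete_triad L T,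
        #|[set p.2 | p in X]| == 3 &
        [set p.2 | p in X] == perpS L' (f @: T)]].

Definition gdist (T : finType) (L : {set {set T}}) (x y : T) (n : nat) : Prop :=
  (exists s : seq T, [/\ path (collinear L) x s, last x s = y & size s = n]) /\
  (forall s : seq T, path (collinear L) x s -> last x s = y -> n <= size s).

(* Main.v *)
Require Import Defs.
From mathcomp Require Import all_boot.
Set Implicit Arguments. Unset Strict Implicit. Unset Printing Implicit Defensive.

Section Generic.
Variable U : finType.

Lemma in3 (x a b c : U) : (x \in [set a; b; c]) = [|| x == a, x == b | x == c].
Proof. by rewrite !inE orbA. Qed.

Lemma cards3 (a b c : U) : a != b -> a != c -> b != c -> #|[set a; b; c]| = 3.
Proof.
move=> ab ac bc.
rewrite -setUA cardsU1 cards2 bc !inE negb_or ab ac.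
by [].
Qed.

Lemma card3P (A : {set U}) : #|A| = 3 ->
  exists a b c, [/\ a != b, a != c, b != c & A = [set a; b; c]].
Proof.
move=> HA.
have: 0 < #|A| by rewrite HA.
case/card_gt0P=> a aA.
have: #|A :\ a| == 2 by move: HA; rewrite (cardsD1 a) aA add1n => -[->].
case/cards2P=> b [c [bc HD]].
have bA : b \in A :\ a by rewrite HD !inE eqxx.
have cA : c \in A :\ a by rewrite HD !inE eqxx orbT.
exists a, b, c; split=> //.
- by move: bA; rewrite !inE eq_sym => /andP[].
- by move: cA; rewrite !inE eq_sym => /andP[].
- by rewrite -(setD1K aA) HD setUA.
Qed.

Lemma imset3 (V : finType) (f : U -> V) (a b c : U) :
  f @: [set a; b; c] = [set f a; f b; f c].
Proof. by rewrite imsetU imsetU1 !imset_set1. Qed.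

End Generic.


Lemma card3_third (U : finType) (A : {set U}) x y : #|A| = 3 -> x \in A -> y \in A -> x != y ->
  exists r, [/\ r \in A, r != x, r != y & forall t, t \in A -> [|| t == x, t == y | t == r]].
Proof.
move=> HA xA yA xy.
have yA' : y \in A :\ x by rewrite !inE eq_sym xy.
have: #|(A :\ x) :\ y| == 1.
  by move: HA; rewrite (cardsD1 x) xA (cardsD1 y (A :\ x)) yA' !add1n => /eqP; rewrite !eqSS.
case/cards1P=> r Hr.
have : r \in (A :\ x) :\ y by rewrite Hr inE.
rewrite !inE => /and3P[ry rx rA].
exists r; split=> // t tA.
apply/contraT; rewrite !negb_or => /and3P[tx ty tr].
have : t \in (A :\ x) :\ y by rewrite !inE ty tx tA.
by rewrite Hr inE (negbTE tr).
Qed.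

Section GQ.
Variable T : finType.
Variable L : {set {set T}}.
Hypothesis HL : is_GQ22 L.

Local Notation col := (collinear L).
Local Notation perp := (perp L).
Local Notation perpS := (perpS L).

Lemma colC x y : col x y = col y x.
Proof.
rewrite /collinear eq_sym; congr (_ && _).
by apply/existsP/existsP => -[l /andP[lL /andP[h1 h2]]]; exists l; rewrite lL h1 h2.
Qed.

Lemma col_neq x y : col x y -> x != y.
Proof. by case/andP. Qed.

Lemma col_line x y : col x y -> exists l, [/\ l \in L, x \in l & y \in l].
Proof. by case/andP=> _ /existsP[l /andP[lL /andP[h1 h2]]]; exists l. Qed.

Lemma line_col l x y : l \in L -> x \in l -> y \in l -> x != y -> col x y.
Proof. by move=> lL xl yl xy; rewrite /collinear xy; apply/existsP; exists l; rewrite lL xl yl. Qed.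

Lemma perpE x y : (y \in perp x) = (y == x) || col x y.
Proof. by rewrite inE. Qed.

Lemma perpC x y : (y \in perp x) = (x \in perp y).
Proof. by rewrite !perpE eq_sym colC. Qed.

Lemma perp_refl x : x \in perp x.
Proof. by rewrite perpE eqxx. Qed.

Lemma col_perp x y : col x y -> y \in perp x.
Proof. by move=> h; rewrite perpE h orbT. Qed.

Lemma line_perp l x y : l \in L -> x \in l -> y \in l -> y \in perp x.
Proof.
move=> lL xl yl; rewrite perpE; case: (y =P x) => //= /eqP yx.
by apply: line_col lL xl yl _; rewrite eq_sym.
Qed.

Lemma perp_col x y : y \in perp x -> y != x -> col x y.
Proof. by rewrite perpE => /orP[/eqP->|//]; rewrite eqxx. Qed.

Lemma notperp x y : y \notin perp x -> (y != x) /\ ~~ col x y.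
Proof. by rewrite perpE negb_or => /andP[]. Qed.

Lemma perpSP (A : {set T}) z : reflect (forall a, a \in A -> z \in perp a) (z \in perpS A).
Proof. exact: bigcapP. Qed.

Lemma perpS2 x y z : (z \in perpS [set x; y]) = (z \in perp x) && (z \in perp y).
Proof.
apply/perpSP/andP => [H|[h1 h2] a].
  by split; apply: H; rewrite !inE eqxx ?orbT.
by move/set2P => [->|->].
Qed.

Lemma perpS3 x y w z : (z \in perpS [set x; y; w]) = [&& z \in perp x, z \in perp y & z \in perp w].
Proof.
apply/perpSP/and3P => [H|[h1 h2 h3] a].
  by split; apply: H; rewrite in3 eqxx ?orbT.
by rewrite in3 => /or3P[]/eqP->.
Qed.

Lemma line_card l : l \in L -> #|l| = 3.
Proof. by case: HL => h _ _; apply: h. Qed.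

Lemma two_on_line l a b p : l \in L -> a \in l -> b \in l -> a != b ->
  p \in perp a -> p \in perp b -> p \in l.
Proof.
move=> lL al bl ab pa pb; apply/contraT => pl.
case: HL => _ _ Hax; have := Hax p l lL pl.
have pa' : col p a.
  by rewrite colC; apply: perp_col pa _; apply/contraNneq: pl => ->.
have pb' : col p b.
  by rewrite colC; apply: perp_col pb _; apply/contraNneq: pl => ->.
have : [set a; b] \subset [set y in l | col p y].
  by apply/subsetP=> z; rewrite !inE => /orP[]/eqP->; rewrite ?al ?bl ?pa' ?pb'.
by move/subset_leq_card; rewrite cards2 ab => /[swap] ->.
Qed.

Lemma proj_ex l x : l \in L -> x \notin l -> exists t, t \in l /\ col x t.
Proof.
move=> lL xl; case: HL => _ _ Hax; have := Hax x l lL xl.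
move=> h; have: 0 < #|[set y in l | col x y]| by rewrite h.
by case/card_gt0P=> t; rewrite inE => /andP[]; exists t.
Qed.

Lemma line3 l x y : l \in L -> x \in l -> y \in l -> x != y ->
  exists r, [/\ r \in l, r != x, r != y & forall t, t \in l -> [|| t == x, t == y | t == r]].
Proof. by move=> lL; apply: card3_third; apply: line_card. Qed.

Lemma uniq_line l m x y : l \in L -> m \in L -> x != y -> x \in l -> y \in l ->
  x \in m -> y \in m -> l = m.
Proof.
move=> lL mL xy xl yl xm ym; apply/setP=> z; apply/idP/idP => zh.
- by apply: (two_on_line mL xm ym xy); rewrite perpC; apply: (line_perp lL zh).
- by apply: (two_on_line lL xl yl xy); rewrite perpC; apply: (line_perp mL zh).
Qed.

Lemma lines_through x : exists l1 l2 l3, [/\ l1 != l2, l1 != l3, l2 != l3 &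
  [set l in L | x \in l] = [set l1; l2; l3]].
Proof. by case: HL => _ h _; apply: card3P. Qed.

Lemma perp2_noncol x y a b : x != y -> ~~ col x y -> a \in perp x -> a \in perp y ->
  b \in perp x -> b \in perp y -> a != b -> ~~ col a b.
Proof.
move=> xy nxy ax ay bx by_ ab; apply/negP => /col_line [l [lL al bl]].
have xl : x \in l by apply: (two_on_line lL al bl ab); rewrite perpC.
have yl : y \in l by apply: (two_on_line lL al bl ab); rewrite perpC.
by move: nxy; rewrite (line_col lL xl yl xy).
Qed.

Lemma P2 x y : x != y -> ~~ col x y -> exists a b c, [/\ a != b, a != c, b != c &
  perpS [set x; y] = [set a; b; c]].
Proof.
move=> xy nxy.
have [l1 [l2 [l3 [n12 n13 n23 Hl]]]] := lines_through x.
have li : forall l, l \in [set l1; l2; l3] -> l \in L /\ x \in l.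
  by move=> l; rewrite -Hl inE => /andP[].
have yli : forall l, l \in [set l1; l2; l3] -> y \notin l.
  move=> l /li [lL xl]; apply/negP => yl.
  by move: nxy; rewrite (line_col lL xl yl xy).
have pj : forall l, l \in [set l1; l2; l3] -> exists t, [/\ t \in l, col y t & t != x].
  move=> l lh; have [lL xl] := li l lh.
  have [t [tl yt]] := proj_ex lL (yli l lh); exists t; split=> //.
  by apply/contraNneq: nxy => <-; rewrite colC.
have l1i : l1 \in [set l1; l2; l3] by rewrite in3 eqxx.
have l2i : l2 \in [set l1; l2; l3] by rewrite in3 eqxx orbT.
have l3i : l3 \in [set l1; l2; l3] by rewrite in3 eqxx !orbT.
have [t1 [t1l yt1 t1x]] := pj _ l1i.
have [t2 [t2l yt2 t2x]] := pj _ l2i.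
have [t3 [t3l yt3 t3x]] := pj _ l3i.
have dist : forall l m t, l \in [set l1; l2; l3] -> m \in [set l1; l2; l3] ->
    t \in l -> t \in m -> t != x -> l = m.
  move=> l m t lh mh tl tm tx; have [lL xl] := li l lh; have [mL xm] := li m mh.
  by apply: (uniq_line lL mL tx).
exists t1, t2, t3; split.
- by apply/contraNneq: n12 => e; apply/eqP; apply: (dist _ _ t1) => //; rewrite e.
- by apply/contraNneq: n13 => e; apply/eqP; apply: (dist _ _ t1) => //; rewrite e.
- by apply/contraNneq: n23 => e; apply/eqP; apply: (dist _ _ t2) => //; rewrite e.
apply/setP => z; rewrite perpS2 in3; apply/andP/idP.
- case=> zx zy.
  have zx' : z != x by apply/contraTneq: zy => ->; rewrite perpE negb_or xy /= colC.
  have [l [lL xl zl]] := col_line (perp_col zx zx').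
  have : l \in [set l1; l2; l3] by rewrite -Hl inE lL xl.
  have key : forall t, t \in l -> col y t -> z == t.
    move=> t tl yt; apply/contraT => zt.
    have : y \in l by apply: (two_on_line lL zl tl zt); rewrite perpC //; apply: col_perp.
    by move=> yl; move: nxy; rewrite (line_col lL xl yl xy).
  rewrite in3 => /or3P[]/eqP e; subst l.
  + by rewrite (key t1 t1l yt1).
  + by rewrite (key t2 t2l yt2) orbT.
  + by rewrite (key t3 t3l yt3) !orbT.
- have hh : forall t l, l \in [set l1; l2; l3] -> t \in l -> col y t ->
      (t \in perp x) && (t \in perp y).
    by move=> t l lh tl yt; have [lL xl] := li l lh; rewrite (line_perp lL xl tl) col_perp.
  by case/or3P=> /eqP ->; apply/andP; [apply: (hh _ l1)|apply: (hh _ l2)|apply: (hh _ l3)].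
Qed.


Lemma notperpI x y : y != x -> ~~ col x y -> y \notin perp x.
Proof. by move=> h1 h2; rewrite perpE negb_or h1. Qed.

Lemma three_lines w l1 l2 l3 l : l1 \in L -> l2 \in L -> l3 \in L ->
  w \in l1 -> w \in l2 -> w \in l3 -> l1 != l2 -> l1 != l3 -> l2 != l3 ->
  l \in L -> w \in l -> [|| l == l1, l == l2 | l == l3].
Proof.
move=> h1 h2 h3 w1 w2 w3 n12 n13 n23 lL wl.
have HS : #|[set m in L | w \in m]| = 3 by case: HL => _ h _; apply: h.
have sub : [set l1; l2; l3] \subset [set m in L | w \in m].
  by apply/subsetP => m; rewrite in3 => /or3P[]/eqP->; rewrite inE ?h1 ?h2 ?h3 ?w1 ?w2 ?w3.
have : [set l1; l2; l3] == [set m in L | w \in m] by rewrite eqEcard sub HS cards3.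
by move/eqP => e; rewrite -in3 e inE lL wl.
Qed.

Lemma regular x y : x != y -> ~~ col x y -> exists w, [/\ w != x, w != y, ~~ col x w,
  ~~ col y w & forall z, z \in perp x -> z \in perp y -> z \in perp w].
Proof.
move=> xy nxy.
have [a [b [c [ab ac bc Habc]]]] := P2 xy nxy.
have mem : forall z, (z \in perp x) && (z \in perp y) = (z \in [set a; b; c]).
  by move=> z; rewrite -Habc perpS2.
have : (a \in perp x) && (a \in perp y) by rewrite mem in3 eqxx.
case/andP => ax ay.
have : (b \in perp x) && (b \in perp y) by rewrite mem in3 eqxx orbT.
case/andP => bx by_.
have : (c \in perp x) && (c \in perp y) by rewrite mem in3 eqxx !orbT.
case/andP => cx cy.
have nab : ~~ col a b := perp2_noncol xy nxy ax ay bx by_ ab.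
have nac : ~~ col a c := perp2_noncol xy nxy ax ay cx cy ac.
have nbc : ~~ col b c := perp2_noncol xy nxy bx by_ cx cy bc.
have [x' [y' [w' [n1 n2 n3 Hab]]]] := P2 ab nab.
have h3 : #|perpS [set a; b]| = 3 by rewrite Hab; apply: cards3.
have xab : x \in perpS [set a; b] by rewrite perpS2 perpC ax perpC bx.
have yab : y \in perpS [set a; b] by rewrite perpS2 perpC ay perpC by_.
have [w [wS wx wy _]] := card3_third h3 xab yab xy.
move: wS; rewrite perpS2 => /andP[wa wb].
have xa : x \in perp a by rewrite perpC.
have xb : x \in perp b by rewrite perpC.
have ya : y \in perp a by rewrite perpC.
have yb : y \in perp b by rewrite perpC.
have nxw : ~~ col x w by apply: (perp2_noncol ab nab xa xb wa wb); rewrite eq_sym.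
have nyw : ~~ col y w by apply: (perp2_noncol ab nab ya yb wa wb); rewrite eq_sym.
exists w; split => // z zx zy.
have : z \in [set a; b; c] by rewrite -mem zx zy.
rewrite in3 => /or3P[]/eqP->; first by rewrite perpC.
  by rewrite perpC.
apply/contraT => cw; have [cw1 ncw] := notperp cw.
have xny : x \notin perp y by apply: notperpI; rewrite // colC.
have cnx : c != x by apply/contraNneq: xny => <-.
have cny : c != y by apply/contraNneq: xny => e; rewrite -e perpC.
have [L1 [L1L xL1 cL1]] := col_line (perp_col cx cnx).
have [L2 [L2L yL2 cL2]] := col_line (perp_col cy cny).
have [x1 [x1L1 x1c x1x H1]] := line3 L1L cL1 xL1 cnx.
have [y1 [y1L2 y1c y1y H2]] := line3 L2L cL2 yL2 cny.
have L12 : L1 != L2.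
  apply/eqP => e; move: xny; rewrite perpC (line_perp L1L xL1) //.
  by rewrite e.
have wL1 : w \notin L1.
  by apply/negP => wL1; move: cw; rewrite (line_perp L1L wL1 cL1).
have wL2 : w \notin L2.
  by apply/negP => wL2; move: cw; rewrite (line_perp L2L wL2 cL2).
have wx1 : col w x1.
  have [t [tL1 wt]] := proj_ex L1L wL1.
  by move: (H1 t tL1) => /or3P[]/eqP ett; move: wt; rewrite ett // => wt;
    [move: ncw | move: nxw; rewrite colC]; rewrite wt.
have wy1 : col w y1.
  have [t [tL2 wt]] := proj_ex L2L wL2.
  by move: (H2 t tL2) => /or3P[]/eqP ett; move: wt; rewrite ett // => wt;
    [move: ncw | move: nyw; rewrite colC]; rewrite wt.
have anc : a \notin perp c by apply: notperpI; rewrite 1?colC // eq_sym.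
have bnc : b \notin perp c by apply: notperpI; rewrite 1?colC // eq_sym.
have aL1 : a \notin L1 by apply/negP => h; move: anc; rewrite (line_perp L1L cL1 h).
have aL2 : a \notin L2 by apply/negP => h; move: anc; rewrite (line_perp L2L cL2 h).
have bL1 : b \notin L1 by apply/negP => h; move: bnc; rewrite (line_perp L1L cL1 h).
have bL2 : b \notin L2 by apply/negP => h; move: bnc; rewrite (line_perp L2L cL2 h).
have wnx : w \notin perp x by apply: notperpI; rewrite // colC.
have wna : w != a by apply/contraNneq: wnx => ->; rewrite perpC.
have wnb : w != b by apply/contraNneq: wnx => ->; rewrite perpC.
have [Ma [MaL aMa wMa]] := col_line (perp_col (wa : w \in perp a) wna).
have [Mb [MbL bMb wMb]] := col_line (perp_col (wb : w \in perp b) wnb).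
have [M [ML wM x1M]] := col_line wx1.
have [N [NL wN y1N]] := col_line wy1.
have xx1 : x != x1 by rewrite eq_sym.
have yy1 : y != y1 by rewrite eq_sym.
have nMab : Ma != Mb.
  by apply/eqP => e; move: nab; rewrite (line_col MaL aMa _ ab) // e.
have nMMa : Ma != M.
  apply/eqP => e; move: aL1; rewrite (two_on_line L1L xL1 x1L1 xx1 ax) //.
  by apply: (line_perp ML x1M); rewrite -e.
have nMMb : Mb != M.
  apply/eqP => e; move: bL1; rewrite (two_on_line L1L xL1 x1L1 xx1 bx) //.
  by apply: (line_perp ML x1M); rewrite -e.
have nNMa : N != Ma.
  apply/eqP => e; move: aL2; rewrite (two_on_line L2L yL2 y1L2 yy1 ay) //.
  by apply: (line_perp NL y1N); rewrite e.
have nNMb : N != Mb.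
  apply/eqP => e; move: bL2; rewrite (two_on_line L2L yL2 y1L2 yy1 by_) //.
  by apply: (line_perp NL y1N); rewrite e.
have y1M : y1 \in M.
  move: (three_lines MaL MbL ML wMa wMb wM nMab nMMa nMMb NL wN).
  by rewrite (negbTE nNMa) (negbTE nNMb) /= => /eqP <-.
have cx1 : c != x1 by rewrite eq_sym.
have cy1 : c != y1 by rewrite eq_sym.
have y1L1 : y1 \in L1.
  apply: (two_on_line L1L cL1 x1L1 cx1).
    by apply: (line_perp L2L cL2 y1L2).
  by apply: (line_perp ML x1M y1M).
by move: L12; rewrite (uniq_line L1L L2L cy1 cL1 y1L1 cL2 y1L2) eqxx.
Qed.


Lemma imset_idf (A : {set T}) : id @: A = A.
Proof. by apply/setP => z; apply/imsetP/idP => [[t tA ->]|zA] //; exists z. Qed.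

Lemma perpS_line l : l \in L -> perpS l = l.
Proof.
move=> lL; apply/setP => t; apply/perpSP/idP => [H|tl a al].
  have [a [b [c [ab _ _ Hl]]]] := card3P (line_card lL).
  have al : a \in l by rewrite Hl in3 eqxx.
  have bl : b \in l by rewrite Hl in3 eqxx orbT.
  by apply: (two_on_line lL al bl ab); apply: H.
exact: (line_perp lL al tl).
Qed.

Local Notation colD := (collinear (calL L L id)).

Lemma calL3 (s1 s2 s3 : T * T) :
  s1.1 != s2.1 -> s1.1 != s3.1 -> s2.1 != s3.1 ->
  s1.2 != s2.2 -> s1.2 != s3.2 -> s2.2 != s3.2 ->
  s1.2 \in perp s1.1 -> s2.2 \in perp s2.1 -> s3.2 \in perp s3.1 ->
  ([set s1.1; s2.1; s3.1] \in L) || complete_triad L [set s1.1; s2.1; s3.1] ->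
  [set s1.2; s2.2; s3.2] = perpS [set s1.1; s2.1; s3.1] ->
  [set s1; s2; s3] \in calL L L id.
Proof.
move=> d12 d13 d23 e12 e13 e23 p1 p2 p3 HT HP.
rewrite inE /= !imset3 HP eqxx andbT HT -HP !cards3 //.
- apply/andP; split => //; apply/subsetP => s; rewrite in3 => /or3P[]/eqP->; by rewrite inE.
- by apply/contraNneq: d12 => ->.
- by apply/contraNneq: d13 => ->.
- by apply/contraNneq: d23 => ->.
Qed.

Lemma colD3 (s1 s2 s3 : T * T) :
  s1.1 != s2.1 -> s1.1 != s3.1 -> s2.1 != s3.1 ->
  s1.2 != s2.2 -> s1.2 != s3.2 -> s2.2 != s3.2 ->
  s1.2 \in perp s1.1 -> s2.2 \in perp s2.1 -> s3.2 \in perp s3.1 ->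
  ([set s1.1; s2.1; s3.1] \in L) || complete_triad L [set s1.1; s2.1; s3.1] ->
  [set s1.2; s2.2; s3.2] = perpS [set s1.1; s2.1; s3.1] ->
  colD s1 s2.
Proof.
move=> d12 d13 d23 e12 e13 e23 p1 p2 p3 HT HP.
rewrite /collinear; apply/andP; split; first by apply/contraNneq: d12 => ->.
apply/existsP; exists [set s1; s2; s3]; rewrite calL3 //.
by rewrite !in3 !eqxx !orbT.
Qed.

Lemma colD6 x1 u1 x2 u2 x3 u3 :
  x1 != x2 -> x1 != x3 -> x2 != x3 ->
  u1 != u2 -> u1 != u3 -> u2 != u3 ->
  u1 \in perp x1 -> u2 \in perp x2 -> u3 \in perp x3 ->
  ([set x1; x2; x3] \in L) || complete_triad L [set x1; x2; x3] ->
  [set u1; u2; u3] = perpS [set x1; x2; x3] ->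
  colD (x1, u1) (x2, u2).
Proof. by move=> *; apply: (@colD3 _ _ (x3, u3)). Qed.

Lemma EL l x y u v : l \in L -> x \in l -> y \in l -> x != y -> u \in l -> v \in l -> u != v ->
  colD (x, u) (y, v).
Proof.
move=> lL xl yl xy ul vl uv.
have [z [zl zx zy Hz]] := line3 lL xl yl xy.
have [w [wl wu wv Hw]] := line3 lL ul vl uv.
have E1 : [set x; y; z] = l.
  apply/setP => t; apply/idP/idP; first by rewrite in3 => /or3P[]/eqP->.
  by move/Hz; rewrite in3.
have E2 : [set u; v; w] = l.
  apply/setP => t; apply/idP/idP; first by rewrite in3 => /or3P[]/eqP->.
  by move/Hw; rewrite in3.
apply: (@colD6 _ _ _ _ z w) => //; try by rewrite eq_sym.
- exact: (line_perp lL xl ul).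
- exact: (line_perp lL yl vl).
- exact: (line_perp lL zl wl).
- by rewrite E1 lL.
- by rewrite E1 E2 perpS_line.
Qed.

Lemma ET x y u v : x != y -> ~~ col x y -> u != v -> u \in perp x -> u \in perp y ->
  v \in perp x -> v \in perp y -> colD (x, u) (y, v).
Proof.
move=> xy nxy uv ux uy vx vy.
have [w [wx wy nxw nyw Hw]] := regular xy nxy.
have [a [b [c [ab ac bc Habc]]]] := P2 xy nxy.
have h3 : #|perpS [set x; y]| = 3 by rewrite Habc; apply: cards3.
have uS : u \in perpS [set x; y] by rewrite perpS2 ux uy.
have vS : v \in perpS [set x; y] by rewrite perpS2 vx vy.
have [t [tS tu tv Ht]] := card3_third h3 uS vS uv.
have ES : [set u; v; t] = perpS [set x; y].
  apply/setP => z; apply/idP/idP; first by rewrite in3 => /or3P[]/eqP->.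
  by move/Ht; rewrite in3.
have E3 : perpS [set x; y; w] = perpS [set x; y].
  apply/setP => z; rewrite perpS3 perpS2.
  by apply/and3P/andP => [[]|[h1 h2]] //; split => //; apply: Hw.
move: tS; rewrite perpS2 => /andP[tx ty].
apply: (@colD6 _ _ _ _ w t) => //; try by rewrite eq_sym.
- exact: Hw.
- have xw : x != w by rewrite eq_sym.
  have yw : y != w by rewrite eq_sym.
  apply/orP; right; rewrite /complete_triad E3 h3 andbT /triad cards3 // eqxx andTb.
  apply/forallP => p; apply/implyP => hp; apply/forallP => q; apply/implyP => hq.
  apply/implyP => pq.
  move: hp hq pq; rewrite !in3 => /or3P[]/eqP-> /or3P[]/eqP-> pq; try by rewrite eqxx in pq.
  all: try by [].
  all: try by rewrite colC.
- exact: (etrans ES (esym E3)).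
Qed.

Ltac fin := solve [ done | by rewrite eq_sym | by rewrite colC | by rewrite perpC
  | match goal with H : forall z, _ -> _ -> _ |- _ => by apply: H end
  | match goal with H : forall z, _ -> _ -> _ |- _ => by rewrite perpC; apply: H end
  | by apply: col_perp | by rewrite perpC; apply: col_perp
  | by apply: col_perp; rewrite colC | by rewrite perpC; apply: col_perp; rewrite colC ].

Definition reach2 (s t : T * T) :=
  exists sq, [/\ path colD s sq, last s sq = t & size sq <= 2].

Lemma r0 s : reach2 s s.
Proof. by exists [::]. Qed.

Lemma r1 s t : colD s t -> reach2 s t.
Proof. by move=> h; exists [:: t]; rewrite /= h. Qed.

Lemma r2 s m t : colD s m -> colD m t -> reach2 s t.
Proof. by move=> h1 h2; exists [:: m; t]; rewrite /= h1 h2. Qed.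

Lemma line_third x y : col x y -> exists l r, [/\ l \in L, x \in l, y \in l, r \in l &
  [/\ r != x, r != y & forall t, t \in l -> [|| t == x, t == y | t == r]]].
Proof.
move=> cxy; have [l [lL xl yl]] := col_line cxy.
have [r [rl rx ry H]] := line3 lL xl yl (col_neq cxy).
by exists l, r.
Qed.

Lemma perp_line3 p q m : q \in perp p -> col p m -> col q m ->
  exists l, [/\ l \in L, p \in l, q \in l & m \in l].
Proof.
move=> qp cpm cqm; case: (eqVneq q p) => [->|qnp].
  by have [l [lL pl ml]] := col_line cpm; exists l.
have [l [lL pl ql]] := col_line (perp_col qp qnp).
exists l; split => //.
apply: (two_on_line lL pl ql); first by rewrite eq_sym.
  by rewrite col_perp.
by rewrite col_perp.
Qed.

Lemma pick_other (A : {set T}) z : #|A| = 3 -> exists m, m \in A /\ m != z.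
Proof.
move=> h; have [a [b [c [ab _ _ HA]]]] := card3P h.
case: (eqVneq a z) => [az|az].
  by exists b; rewrite HA in3 eqxx orbT -az eq_sym.
by exists a; rewrite HA in3 eqxx.
Qed.

Lemma perp2_card x y : x != y -> ~~ col x y -> #|perpS [set x; y]| = 3.
Proof.
by move=> xy nxy; have [a [b [c [ab ac bc ->]]]] := P2 xy nxy; apply: cards3.
Qed.

Lemma exists_m p q y v : q \in perp p -> v \in perp y -> p \notin perp v -> q \notin perp y ->
  ~~ col p y -> p != y -> ~~ col q v -> q != v ->
  exists m, [/\ col p m, col q m, col y m & col v m].
Proof.
move=> qp vy pv qy npy pny nqv qv.
have [pnv ncvp] := notperp pv.
have [qny ncyq] := notperp qy.
have pyp : p \notin perp y by apply: notperpI; rewrite // colC.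
have ypp : y \notin perp p by rewrite perpC.
case: (eqVneq q p) => [eqp|qnp]; case: (eqVneq v y) => [evy|vny].
- subst q v.
  have [m [mS _]] := pick_other p (perp2_card pny npy).
  move: mS; rewrite perpS2 => /andP[mp my].
  have mnp : m != p by apply/contraNneq: pyp => <-.
  have mny : m != y by apply/contraNneq: ypp => <-.
  by exists m; split; apply: perp_col.
- subst q.
  have [l [lL yl vl]] := col_line (perp_col vy vny).
  have pl : p \notin l by apply/negP => pl; move: pyp; rewrite (line_perp lL yl pl).
  have [m [ml pm]] := proj_ex lL pl.
  have ymn : y != m by apply/contraNneq: npy => ->.
  have vmn : v != m by apply/contraNneq: ncvp => ->; rewrite colC.
  by exists m; split => //; apply: line_col lL _ ml _.
- subst v.
  have [l [lL pl ql]] := col_line (perp_col qp qnp).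
  have yl : y \notin l by apply/negP => yl; move: ypp; rewrite (line_perp lL pl yl).
  have [m [ml ym]] := proj_ex lL yl.
  have pmn : p != m by apply/contraNneq: npy => ->; rewrite colC.
  have qmn : q != m by apply/contraNneq: ncyq => ->.
  by exists m; split => //; apply: line_col lL _ ml _.
- have [l [r [lL pl ql rl [rp rq Hr]]]] := line_third (perp_col qp qnp).
  have yl : y \notin l by apply/negP => yl; move: ypp; rewrite (line_perp lL pl yl).
  have vl : v \notin l by apply/negP => vl; move: pv; rewrite perpC (line_perp lL pl vl).
  have [t1 [t1l yt1]] := proj_ex lL yl.
  have [t2 [t2l vt2]] := proj_ex lL vl.
  have e1 : t1 = r.
    move: (Hr t1 t1l) => /or3P[]/eqP // ett; subst t1.
    - by rewrite colC yt1 in npy.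
    - by rewrite yt1 in ncyq.
  have e2 : t2 = r.
    move: (Hr t2 t2l) => /or3P[]/eqP // ett; subst t2.
    - by rewrite vt2 in ncvp.
    - by rewrite colC vt2 in nqv.
  subst t1 t2; exists r; split => //.
  + by apply: (line_col lL pl rl); rewrite eq_sym.
  + by apply: (line_col lL ql rl); rewrite eq_sym.
Qed.

Lemma lemA p q y v : q \in perp p -> v \in perp y ->
  (p \in perp v) = (q \in perp y) -> reach2 (p, q) (y, v).
Proof.
move=> qp vy E.
case: (boolP (p \in perp v)) => pv.
-
  rewrite pv in E.
  have qy : q \in perp y by rewrite -E.
  case: (eqVneq p y) => [epy|py].
  + subst y.
    case: (eqVneq q v) => [<-|qv]; first exact: r0.
    case: (boolP (col q v)) => cqv.
    * case: (eqVneq p v) => [epv|pnv].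
        subst v.
        have [l [r [lL pl ql rl [rp rq _]]]] := line_third (perp_col qp qv).
        apply: (@r2 _ (r, r)).
          by apply: (EL lL pl rl _ ql rl); rewrite eq_sym.
        by apply: (EL lL rl pl rp rl pl rp).
      case: (eqVneq p q) => [epq|pnq].
        subst q.
        have vnp : v != p by rewrite eq_sym.
        have [l [r [lL pl vl rl [rp rv _]]]] := line_third (perp_col vy vnp).
        apply: (@r2 _ (r, r)).
          by apply: (EL lL pl rl _ pl rl); rewrite eq_sym.
        by apply: (EL lL rl pl rp rl vl).
      have qnp : q != p by rewrite eq_sym.
      have [l [lL pl ql]] := col_line (perp_col qp qnp).
      have vl : v \in l.
        apply: (two_on_line lL pl ql pnq); first by rewrite perpC.
        by apply: col_perp.
      apply: (@r2 _ (q, p)).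
        by apply: (EL lL pl ql pnq ql pl); rewrite eq_sym.
      by apply: (EL lL ql pl _ pl vl pnv); rewrite eq_sym.
    * have qnp : q != p.
        by apply/contraNneq: cqv => eqp; move: (perp_col vy); rewrite -eqp eq_sym => /(_ qv).
      have vnp : v != p.
        by apply/contraNneq: cqv => ->; rewrite colC; apply: perp_col qp qnp.
      have pS : p \in perpS [set q; v] by rewrite perpS2 perpC qp pv.
      have [m [mS mp]] := pick_other p (perp2_card qv cqv).
      move: mS; rewrite perpS2 => /andP[mq mv].
      have [w [wq wv nqw nvw Hw]] := regular qv cqv.
      have pq' : p \in perp q by rewrite perpC.
      have npm : ~~ col p m by apply: (perp2_noncol qv cqv pq' pv mq mv); rewrite eq_sym.
      have wp : w \in perp p by rewrite perpC; apply: Hw.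
      have wm : w \in perp m by rewrite perpC; apply: Hw.
      apply: (@r2 _ (m, w)).
        by apply: (ET _ npm); fin.
      by apply: (ET _ _ wv); fin.
  + case: (boolP (col p y)) => cpy.
    * have [l [r [lL pl yl rl [rp ry Hr]]]] := line_third cpy.
      have ql : q \in l by apply: (two_on_line lL pl yl py).
      have vl : v \in l by apply: (two_on_line lL pl yl py); rewrite // perpC.
      case: (eqVneq q v) => [eqv|qv]; last by apply: r1; apply: (EL lL pl yl py ql vl qv).
      subst v; move: (Hr q ql) => /or3P[]/eqP eq; subst q.
      - apply: (@r2 _ (r, r)).
          by apply: (EL lL pl rl _ pl rl); rewrite eq_sym.
        by apply: (EL lL rl yl ry rl pl rp).
      - apply: (@r2 _ (r, r)).
          by apply: (EL lL pl rl _ yl rl); rewrite eq_sym.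
        by apply: (EL lL rl yl ry rl yl ry).
      - apply: (@r2 _ (r, p)).
          by apply: (EL lL pl rl _ rl pl rp); rewrite eq_sym.
        by apply: (EL lL rl yl ry pl rl); rewrite eq_sym.
    * have vp : v \in perp p by rewrite perpC.
      case: (eqVneq q v) => [eqv|qv]; last by apply: r1; apply: ET.
      subst v.
      have [w [wp wy npw nyw Hw]] := regular py cpy.
      have [m [mS mq]] := pick_other q (perp2_card py cpy).
      move: mS; rewrite perpS2 => /andP[mp my].
      apply: (@r2 _ (w, m)).
        by apply: (ET _ npw); fin.
      by apply: (ET _ _ mq); fin.
-
  rewrite (negbTE pv) in E.
  have qy : q \notin perp y by rewrite -E.
  have [pnv ncpv] := notperp pv.
  have [qny ncyq] := notperp qy.
  have pny : p != y by apply/contraNneq: pv => ->; rewrite perpC.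
  case: (boolP (col p y)) => cpy.
  + have qnp : q != p by apply/contraNneq: qy => ->; rewrite perpC (col_perp cpy).
    have [l [r [lL pl ql rl [rp rq Hr]]]] := line_third (perp_col qp qnp).
    case: (boolP (col q v)) => cqv.
    * apply: (@r2 _ (q, p)).
        by apply: (EL lL pl ql _ ql pl); fin.
      by apply: ET; fin.
    * have ynr : y \notin perp r.
        apply/negP => yr; move: qy; rewrite perpC (line_perp lL ql) //.
        by apply: (two_on_line lL pl rl _ (col_perp cpy) yr); rewrite eq_sym.
      have [yr ncry] := notperp ynr.
      have vl : v \notin l by apply/negP => vl; move: pv; rewrite perpC (line_perp lL pl vl).
      have [t [tl vt]] := proj_ex lL vl.
      have vr : v \in perp r.
        move: (Hr t tl) => /or3P[]/eqP ett; subst t.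
        - by rewrite vt in ncpv.
        - by rewrite colC vt in cqv.
        - by rewrite perpC col_perp.
      have pr : p \in perp r by rewrite (line_perp lL rl pl).
      apply: (@r2 _ (r, p)).
        by apply: (EL lL pl rl _ ql pl); fin.
      by apply: ET; fin.
  + case: (boolP (col q v)) => cqv.
    * have qnp : q != p by apply/contraNneq: pv => <-; rewrite perpC (col_perp cqv).
      have [l [r [lL pl ql rl [rp rq Hr]]]] := line_third (perp_col qp qnp).
      have yl : y \notin l.
        by apply/negP => yl; move: cpy; rewrite (line_col lL pl yl pny).
      have [t [tl yt]] := proj_ex lL yl.
      have ry : r \in perp y.
        move: (Hr t tl) => /or3P[]/eqP ett; subst t.
        - by rewrite colC yt in cpy.
        - by rewrite yt in ncyq.
        - by rewrite col_perp.
      have rnv : r != v.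
        by apply/contraNneq: pv => <-; rewrite perpC (line_perp lL pl rl).
      have rq' : r \in perp q by rewrite (line_perp lL ql rl).
      apply: (@r2 _ (q, r)).
        by apply: (EL lL pl ql _ ql rl); fin.
      by apply: ET; fin.
    * have qv : q != v by apply/contraNneq: pv => <-; rewrite perpC.
      have [m [cpm cqm cym cvm]] := exists_m qp vy pv qy cpy pny cqv qv.
      have [l1 [l1L pl1 ql1 ml1]] := perp_line3 qp cpm cqm.
      have [l2 [l2L yl2 vl2 ml2]] := perp_line3 vy cym cvm.
      apply: (@r2 _ (m, m)).
        exact: (EL l1L pl1 ml1 (col_neq cpm) ql1 ml1 (col_neq cqm)).
      by apply: (EL l2L ml2 yl2 _ ml2 vl2); rewrite eq_sym col_neq.
Qed.

Lemma cards3_inv (x y z : T) : #|[set x; y; z]| = 3 -> [/\ x != y, x != z & y != z].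
Proof.
rewrite -setUA cardsU1 cards2 !inE negb_or.
by case: (x == y); case: (x == z); case: (y == z).
Qed.

Lemma triad_noncol S t1 t2 : triad L S -> t1 \in S -> t2 \in S -> t1 != t2 -> ~~ col t1 t2.
Proof.
case/andP => _ /forallP H t1S t2S t12.
by move: (H t1); rewrite t1S /= => /forallP /(_ t2); rewrite t2S t12.
Qed.

Lemma perpS_sub (A B : {set T}) : A \subset B -> perpS B \subset perpS A.
Proof.
move=> AB; apply/subsetP => z /perpSP H; apply/perpSP => a aA.
by apply: H; apply: (subsetP AB).
Qed.

Lemma K1 S t1 t2 z : (S \in L) || complete_triad L S -> t1 \in S -> t2 \in S -> t1 != t2 ->
  z \in perp t1 -> z \in perp t2 -> z \in perpS S.
Proof.
case/orP => [SL|/andP[tS /eqP cS]] t1S t2S t12 z1 z2.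
  have zS : z \in S by apply: (two_on_line SL t1S t2S t12).
  by apply/perpSP => a aS; apply: (line_perp SL aS zS).
have n12 := triad_noncol tS t1S t2S t12.
have sub : perpS S \subset perpS [set t1; t2].
  by apply: perpS_sub; apply/subsetP => a /set2P [] ->.
have : perpS S == perpS [set t1; t2] by rewrite eqEcard sub cS perp2_card.
by move/eqP ->; rewrite perpS2 z1 z2.
Qed.

Lemma good_perp S : (S \in L) || complete_triad L S -> #|S| = 3 ->
  ((perpS S \in L) || complete_triad L (perpS S)) /\ perpS (perpS S) = S.
Proof.
case/orP => [SL|/andP[tS /eqP cS]] c3.
  by rewrite !perpS_line // SL.
have [t1 [t2 [t3 [d12 d13 d23 ES]]]] := card3P c3.
have t1S : t1 \in S by rewrite ES in3 eqxx.
have t2S : t2 \in S by rewrite ES in3 eqxx orbT.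
have n12 := triad_noncol tS t1S t2S d12.
have [u1 [u2 [u3 [e12 e13 e23 ES']]]] := card3P cS.
have u1S : u1 \in perpS S by rewrite ES' in3 eqxx.
have u2S : u2 \in perpS S by rewrite ES' in3 eqxx orbT.
have inP : forall u, u \in perpS S -> (u \in perp t1) && (u \in perp t2).
  by move=> u /perpSP H; rewrite !H.
have nu12 : ~~ col u1 u2.
  have /andP[a1 a2] := inP _ u1S; have /andP[b1 b2] := inP _ u2S.
  exact: (perp2_noncol d12 n12 a1 a2 b1 b2 e12).
have Ssub : S \subset perpS (perpS S).
  apply/subsetP => t ht; apply/perpSP => u /perpSP H.
  by rewrite perpC; apply: H.
have sub2 : perpS (perpS S) \subset perpS [set u1; u2].
  by apply: perpS_sub; apply/subsetP => a /set2P [] ->.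
have le3 : #|perpS (perpS S)| <= 3.
  by rewrite -(perp2_card e12 nu12); apply: subset_leq_card.
have EQ : S == perpS (perpS S) by rewrite eqEcard Ssub c3.
split; last by rewrite -(eqP EQ).
apply/orP; right; rewrite /complete_triad -(eqP EQ) c3 eqxx andbT /triad cS eqxx /=.
apply/forallP => u; apply/implyP => uS; apply/forallP => w; apply/implyP => wS.
apply/implyP => uw.
have /andP[a1 a2] := inP _ uS; have /andP[b1 b2] := inP _ wS.
exact: (perp2_noncol d12 n12 a1 a2 b1 b2 uw).
Qed.

Lemma lemB Ln p q (a b c : T * T) : Ln \in calL L L id -> a \in Ln -> b \in Ln -> c \in Ln ->
  a != b -> c != a -> c != b -> q \in perp p ->
  ~~ [&& (p \in perp a.2) != (q \in perp a.1), (p \in perp b.2) != (q \in perp b.1)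
       & (p \in perp c.2) != (q \in perp c.1)].
Proof.
move=> LnL aL bL cL ab ca cb qp.
move: LnL; rewrite inE /= => /and5P[_ /eqP c3 /eqP cT Tgood /andP[/eqP cU /eqP EU]].
have ac : a != c by rewrite eq_sym.
have bc : b != c by rewrite eq_sym.
have ELn : Ln = [set a; b; c].
  apply/eqP; rewrite eq_sym eqEcard c3 cards3 // andbT.
  by apply/subsetP => z; rewrite in3 => /or3P[]/eqP->.
move: cT Tgood cU EU; rewrite ELn !imset3.
set T1 := [set a.1; b.1; c.1]; set T2 := [set a.2; b.2; c.2].
move=> cT Tgood cU EU.
have [d1ab d1ac d1bc] := cards3_inv cT.
have [d2ab d2ac d2bc] := cards3_inv cU.
have [T2good EP] := good_perp Tgood cT.
rewrite -EU in T2good EP.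
have ha1 : a.1 \in T1 by rewrite in3 eqxx.
have hb1 : b.1 \in T1 by rewrite in3 eqxx orbT.
have hc1 : c.1 \in T1 by rewrite in3 eqxx !orbT.
have ha2 : a.2 \in T2 by rewrite in3 eqxx.
have hb2 : b.2 \in T2 by rewrite in3 eqxx orbT.
have hc2 : c.2 \in T2 by rewrite in3 eqxx !orbT.
apply/and3P => -[Na Nb Nc].
have KB : forall t1 t2, t1 \in T1 -> t2 \in T1 -> t1 != t2 -> q \in perp t1 -> q \in perp t2 -> False.
  move=> t1 t2 h1 h2 h12 q1 q2.
  have qS := K1 Tgood h1 h2 h12 q1 q2.
  have pq : p \in perp q by rewrite perpC.
  move: (qS); rewrite -EU in3 => /or3P[]/eqP qe; move/perpSP: qS => qS.
  - by move: Na; rewrite -qe pq qS.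
  - by move: Nb; rewrite -qe pq qS.
  - by move: Nc; rewrite -qe pq qS.
have KA : forall t1 t2, t1 \in T2 -> t2 \in T2 -> t1 != t2 -> p \in perp t1 -> p \in perp t2 -> False.
  move=> t1 t2 h1 h2 h12 p1 p2.
  have pS := K1 T2good h1 h2 h12 p1 p2.
  move: (pS); rewrite EP in3 => /or3P[]/eqP pe; move/perpSP: pS => pS.
  - by move: Na; rewrite -pe qp pS.
  - by move: Nb; rewrite -pe qp pS.
  - by move: Nc; rewrite -pe qp pS.
move: Na Nb Nc.
case Aa: (p \in perp a.2); case Ba: (q \in perp a.1); case Ab: (p \in perp b.2);
  case Bb: (q \in perp b.1); case Ac: (p \in perp c.2); case Bc: (q \in perp c.1) => //= _ _ _.
all: first [ by apply: (KB a.1 b.1) | by apply: (KB a.1 c.1) | by apply: (KB b.1 c.1)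
           | by apply: (KA a.2 b.2) | by apply: (KA a.2 c.2) | by apply: (KA b.2 c.2) ].
Qed.

Lemma diag_main Ln (theta a b c : T * T) :
  Ln \in calL L L id -> theta \in calP L id ->
  a \in Ln -> b \in Ln -> c \in Ln -> a != b -> c != a -> c != b ->
  gdist (calL L L id) theta a 3 -> gdist (calL L L id) theta b 3 ->
  gdist (calL L L id) theta c 2.
Proof.
move=> LnL thP aL bL cL ab ca cb [_ Ga] [_ Gb].
case: theta thP Ga Gb => p q; rewrite inE /= => qp Ga Gb.
have inP : forall z, z \in Ln -> z.2 \in perp z.1.
  move=> z zL; move: LnL; rewrite inE /= => /andP[/subsetP sub _].
  by move: (sub z zL); rewrite inE.
have no2 : forall z, (forall s, path colD (p, q) s -> last (p, q) s = z -> 3 <= size s) ->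
    ~ reach2 (p, q) z.
  by move=> z G [sq [h1 h2 h3]]; move: (G sq h1 h2); rewrite leqNgt ltnS h3.
have NN : forall z, z \in Ln -> (forall s, path colD (p, q) s -> last (p, q) s = z -> 3 <= size s) ->
    (p \in perp z.2) != (q \in perp z.1).
  move=> [y v] zL G; apply/negP => /eqP E; apply: (no2 _ G).
  by apply: lemA => //; apply: (inP (y, v)).
have Na := NN a aL Ga.
have Nb := NN b bL Gb.
have Nc : (p \in perp c.2) == (q \in perp c.1).
  by move: (lemB LnL aL bL cL ab ca cb qp); rewrite Na Nb /= negbK.
have Rc : reach2 (p, q) c.
  by case: c cL {ca cb} Nc => y v cL /eqP Nc; apply: lemA => //; apply: (inP (y, v)).
have cola : colD c a.
  by rewrite /collinear ca; apply/existsP; exists Ln; rewrite LnL cL aL.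
have low : forall s, path colD (p, q) s -> last (p, q) s = c -> 2 <= size s.
  case=> [|t [|t' s]] //=.
    move=> _ e; have := Ga [:: a]; rewrite /= e cola => /(_ isT erefl).
    by [].
  move=> /andP[h _] e; have := Ga [:: t; a]; rewrite /= h e cola => /(_ isT erefl).
  by [].
split => //.
case: Rc => sq [h1 h2 h3]; exists sq; split => //.
by apply/eqP; rewrite eqn_leq h3 (low sq h1 h2).
Qed.

End GQ.


Section Transport.
Variables (P P' : finType) (L : {set {set P}}) (L' : {set {set P'}}) (f : P -> P') (g : P' -> P).
Hypotheses (fK : cancel f g) (gK : cancel g f).
Hypothesis iso : forall l : {set P}, (l \in L) = (f @: l \in L').

Lemma mf (z : P') (A : {set P}) : (z \in f @: A) = (g z \in A).
Proof.
apply/imsetP/idP => [[y yA ->]|h]; first by rewrite fK.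
by exists (g z); rewrite ?gK.
Qed.

Lemma finj : injective f.
Proof. exact: can_inj fK. Qed.

Lemma col_f x y : collinear L' (f x) (f y) = collinear L x y.
Proof.
rewrite /collinear (inj_eq finj); congr (_ && _).
apply/existsP/existsP => [[l' /andP[l'L /andP[h1 h2]]]|[l /andP[lL /andP[h1 h2]]]].
  exists (g @: l').
  have E : f @: (g @: l') = l'.
    by apply/setP => z; rewrite mf mem_imset //; apply: can_inj gK.
  rewrite iso E l'L -(mem_imset _ _ finj) E h1 -(mem_imset _ _ finj) E h2.
  by [].
exists (f @: l); rewrite -iso lL !mem_imset //; first by rewrite h1 h2.
  exact: finj.
exact: finj.
Qed.

Lemma col_g x y : collinear L' x y = collinear L (g x) (g y).
Proof. by rewrite -col_f !gK. Qed.

Lemma perp_f x : perp L' (f x) = f @: perp L x.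
Proof.
apply/setP => z; rewrite mf !inE col_g fK; congr (_ || _).
by apply/eqP/eqP => [->|<-]; rewrite ?fK ?gK.
Qed.

Lemma perpS_f (A : {set P}) : perpS L' (f @: A) = f @: perpS L A.
Proof.
apply/setP => z; rewrite mf; apply/bigcapP/bigcapP => H a aA.
  by move: (H (f a) (imset_f _ aA)); rewrite perp_f mf.
by rewrite -(gK a) perp_f mf; apply: H; rewrite -mf.
Qed.

Lemma triad_f (A : {set P}) : triad L' (f @: A) = triad L A.
Proof.
rewrite /triad card_imset; last exact: finj.
congr (_ && _); apply/forallP/forallP => H x.
  apply/implyP => xA; apply/forallP => y; apply/implyP => yA; apply/implyP => xy.
  move: (H (f x)) => /implyP /(_ (imset_f _ xA)) /forallP /(_ (f y)) /implyP
    /(_ (imset_f _ yA)) /implyP.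
  by rewrite (inj_eq finj) col_f => /(_ xy).
apply/implyP; rewrite mf => xA; apply/forallP => y; apply/implyP; rewrite mf => yA.
apply/implyP => xy.
move: (H (g x)) => /implyP /(_ xA) /forallP /(_ (g y)) /implyP /(_ yA) /implyP.
rewrite col_g (inj_eq (can_inj gK)); exact.
Qed.

Lemma ct_f (A : {set P}) : complete_triad L' (f @: A) = complete_triad L A.
Proof.
by rewrite /complete_triad triad_f perpS_f card_imset //; exact: finj.
Qed.

Definition hh (s : P * P') : P' * P' := (f s.1, s.2).
Definition hi (s : P' * P') : P * P' := (g s.1, s.2).

Lemma hhK : cancel hh hi.
Proof. by case=> x u; rewrite /hh /hi /= fK. Qed.
Lemma hiK : cancel hi hh.
Proof. by case=> x u; rewrite /hh /hi /= gK. Qed.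

Lemma calP_h s : (s \in calP L' f) = (hh s \in calP L' id).
Proof. by rewrite !inE. Qed.

Lemma calL_h X : (X \in calL L L' f) = (hh @: X \in calL L' L' id).
Proof.
have h1 : [set p.1 | p in hh @: X] = f @: [set p.1 | p in X].
  by rewrite -!imset_comp; apply: eq_imset => -[].
have h2 : [set p.2 | p in hh @: X] = [set p.2 | p in X].
  by rewrite -!imset_comp; apply: eq_imset => -[].
have c1 : #|hh @: X| = #|X| by apply: card_imset; exact: (can_inj hhK).
have c2 : #|f @: [set p.1 | p in X]| = #|[set p.1 | p in X]|.
  by apply: card_imset; exact: finj.
rewrite !inE /= h1 h2 imset_id c1 c2 -iso ct_f.
congr (_ && _).
apply/subsetP/subsetP => H z.
  by rewrite -(hiK z) mem_imset; [rewrite -calP_h; apply: H | exact: (can_inj hhK)].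
by move=> zX; rewrite calP_h; apply: H; rewrite mem_imset //; exact: (can_inj hhK).
Qed.

Lemma colL_h s t : collinear (calL L L' f) s t = collinear (calL L' L' id) (hh s) (hh t).
Proof.
rewrite /collinear (inj_eq (can_inj hhK)); congr (_ && _).
apply/existsP/existsP => [[X /andP[XL /andP[sX tX]]]|[X /andP[XL /andP[sX tX]]]].
  exists (hh @: X); rewrite -calL_h XL !mem_imset ?sX ?tX //; exact: (can_inj hhK).
exists (hi @: X).
have E : hh @: (hi @: X) = X.
  by rewrite -imset_comp (eq_imset _ hiK) imset_id.
rewrite calL_h E XL -(mem_imset _ _ (can_inj hhK)) E sX.
by rewrite -(mem_imset _ _ (can_inj hhK)) E tX.
Qed.

Lemma path_h s sq : path (collinear (calL L L' f)) s sq =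
  path (collinear (calL L' L' id)) (hh s) (map hh sq).
Proof. by elim: sq s => [|t sq IH] s //=; rewrite colL_h IH. Qed.

Lemma gdist_h s t n : gdist (calL L L' f) s t n <-> gdist (calL L' L' id) (hh s) (hh t) n.
Proof.
split.
  case=> [[sq [h1 h2 h3]] H]; split.
    exists (map hh sq); rewrite -path_h size_map; split => //.
    by rewrite -h2 (last_map hh).
  move=> sq' p' l'; have := H (map hi sq').
  rewrite size_map; apply.
    by rewrite path_h -map_comp (eq_map hiK) map_id.
  apply: (can_inj hhK); rewrite -l' -(last_map hh) -map_comp (eq_map hiK) map_id.
  by [].
case=> [[sq [h1 h2 h3]] H]; split.
  exists (map hi sq); rewrite path_h -map_comp (eq_map hiK) map_id size_map; split => //.
  apply: (can_inj hhK); rewrite -h2 -(last_map hh) -map_comp (eq_map hiK) map_id.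
  by [].
move=> sq' p' l'; have := H (map hh sq'); rewrite size_map; apply.
  by rewrite -path_h.
by rewrite (last_map hh) l'.
Qed.

End Transport.

Unset Implicit Arguments.

Theorem proposition3p6 (P P' : finType) (L : {set {set P}}) (L' : {set {set P'}})
  (f : P -> P') :
  is_GQ22 L -> is_GQ22 L' -> geom_iso L L' f ->
  forall (Ln : {set P * P'}) (theta a b c : P * P'),
    Ln \in calL L L' f -> theta \in calP L' f ->
    a \in Ln -> b \in Ln -> c \in Ln -> a != b -> c != a -> c != b ->
    gdist (calL L L' f) theta a 3 -> gdist (calL L L' f) theta b 3 ->
    gdist (calL L L' f) theta c 2.
Proof.
move=> _ HL' [[g fK gK] iso] Ln theta a b c LnL thP aL bL cL ab ca cb Ga Gb.
have hinj := can_inj (hhK fK).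
apply/(gdist_h fK gK iso).
apply: (@diag_main _ _ HL' (hh f @: Ln) (hh f theta) (hh f a) (hh f b) (hh f c)).
- by rewrite -(calL_h fK gK iso).
- by rewrite -(calP_h).
- by apply: imset_f.
- by apply: imset_f.
- by apply: imset_f.
- by rewrite (inj_eq hinj).
- by rewrite (inj_eq hinj).
- by rewrite (inj_eq hinj).
- by apply/(gdist_h fK gK iso).
- by apply/(gdist_h fK gK iso).
Qed.
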